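(* Let $\kappa,\kappa'$ be two cardinals such that $\kappa\geq 2^{\kappa'}$, and assume $\kappa$ is infinite. Then every functor ${\sf Sets}^{\leq\kappa}_{\neq\emptyset}\to{\sf Sets}^{\leq\kappa'}_{\neq\emptyset}$ and every functor ${\sf Sets}^{\leq\kappa}_{*}\to{\sf Sets}^{\leq\kappa'}_{*}$ is isomorphic to a constant functor.
   Context: For a cardinal $\lambda$, ${\sf Sets}^{\leq\lambda}_{\neq\emptyset}$ denotes the category of non-empty sets of cardinality $\leq\lambda$ with all maps, and ${\sf Sets}^{\leq\lambda}_{*}$ the category of pointed sets of cardinality $\leq\lambda$ with base-point preserving maps. *)

(* Defs.v *)
From mathcomp Require Import ssreflect ssrfun ssrbool.
Set Implicit Arguments. Unset Strict Implicit. Unset Printing Implicit Defensive.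

(* A cardinal lambda is represented by a type K of cardinality lambda;
   "a set X has cardinality <= lambda" means there is an injection X -> K. *)

Record NESet (K : Type) := {
  ne_car :> Type;
  ne_small : exists f : ne_car -> K, injective f;
  ne_nonempty : inhabited ne_car }.

Record NEFunctor (K K' : Type) := {
  nef_obj : NESet K -> NESet K';
  nef_map : forall X Y : NESet K, (X -> Y) -> nef_obj X -> nef_obj Y;
  nef_id : forall (X : NESet K) (x : nef_obj X), nef_map (fun a : X => a) x = x;
  nef_comp : forall (X Y Z : NESet K) (f : X -> Y) (g : Y -> Z) (x : nef_obj X),
      nef_map (g \o f) x = nef_map g (nef_map f x) }.

Arguments nef_map {K K'} n {X Y} _ _.
Definition NE_iso_const (K K' : Type) (F : NEFunctor K K') : Prop :=
  exists C : NESet K', exists alpha : forall X : NESet K, nef_obj F X -> C,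
    (forall X, bijective (alpha X)) /\
    (forall (X Y : NESet K) (f : X -> Y) (x : nef_obj F X),
        alpha Y (nef_map F f x) = alpha X x).

Record PtSet (K : Type) := {
  pt_car :> Type;
  pt_base : pt_car;
  pt_small : exists f : pt_car -> K, injective f }.

Definition pt_hom (K : Type) (X Y : PtSet K) : Type :=
  { f : X -> Y | f (pt_base X) = pt_base Y }.

Definition pt_id (K : Type) (X : PtSet K) : pt_hom X X :=
  exist _ (fun a : X => a) erefl.

Lemma pt_comp_proof (K : Type) (X Y Z : PtSet K) (f : pt_hom X Y) (g : pt_hom Y Z) :
  (sval g \o sval f) (pt_base X) = pt_base Z.
Proof. by case: f => f hf; case: g => g hg /=; rewrite hf hg. Qed.

Definition pt_comp (K : Type) (X Y Z : PtSet K) (f : pt_hom X Y) (g : pt_hom Y Z)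
  : pt_hom X Z := exist _ (sval g \o sval f) (pt_comp_proof f g).

Record PtFunctor (K K' : Type) := {
  pf_obj : PtSet K -> PtSet K';
  pf_map : forall X Y : PtSet K, pt_hom X Y -> pt_hom (pf_obj X) (pf_obj Y);
  pf_id : forall (X : PtSet K) (x : pf_obj X), sval (pf_map (pt_id X)) x = x;
  pf_comp : forall (X Y Z : PtSet K) (f : pt_hom X Y) (g : pt_hom Y Z) (x : pf_obj X),
      sval (pf_map (pt_comp f g)) x = sval (pf_map g) (sval (pf_map f) x) }.

Arguments pf_map {K K'} p {X Y} _.
Definition Pt_iso_const (K K' : Type) (F : PtFunctor K K') : Prop :=
  exists C : PtSet K', exists alpha : forall X : PtSet K, pt_hom (pf_obj F X) C,
    (forall X, bijective (sval (alpha X))) /\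
    (forall (X Y : PtSet K) (f : pt_hom X Y) (x : pf_obj F X),
        sval (alpha Y) (sval (pf_map F f) x) = sval (alpha X) x).

(* Main.v *)
Require Import Defs.
From mathcomp Require Import ssreflect ssrfun ssrbool eqtype ssrnat choice.
From mathcomp Require Import boolp classical_sets.
From Stdlib Require Import Classical.
Set Implicit Arguments. Unset Strict Implicit. Unset Printing Implicit Defensive.

Lemma zornP (T : Type) (t0 : T) (R : T -> T -> Prop) :
  (forall t, R t t) -> (forall r s t, R r s -> R s t -> R r t) ->
  (forall C : T -> Prop, (forall s t, C s -> C t -> R s t \/ R t s) ->
     exists t, forall s, C s -> R s t) ->
  exists t, forall s, R t s -> R s t.
Proof.
move=> Rr Rt Rc.
have [| | |t tmax] := @ZL_preorder T t0 (fun s t => `[< R s t >]).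
- by move=> t; apply/asboolP.
- by move=> r s t /asboolP h1 /asboolP h2; apply/asboolP; apply: Rt h2.
- move=> A Atot; have [|t Ht] := Rc A.
    by move=> s t As At; case: (Atot s t As At) => /asboolP; [left|right].
  by exists t => s As; apply/asboolP; apply: Ht.
by exists t => s /asboolP/tmax/asboolP.
Qed.

Lemma glue {I X Y : Type} (C : I -> Prop) (D : I -> X -> Prop) (h : I -> X -> Y)
  (h0 : X -> Y) :
  (forall s t x, C s -> C t -> D s x -> D t x -> h s x = h t x) ->
  exists hs : X -> Y, forall t x, C t -> D t x -> hs x = h t x.
Proof.
move=> compat.
exists (fun x => match pselect (exists t, C t /\ D t x) with
                 | left e => h (proj1_sig (cid e)) x | right _ => h0 x end).
move=> t x Ct Dtx; case: pselect => [e|ne]; last by exfalso; apply: ne; exists t.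
by case: (cid e) => s [Cs Dsx] /=; apply: compat.
Qed.

Record pinj (T : Type) (A B : T -> Prop) := PInj {
  pd : T -> Prop; ph : T -> T;
  pdA : forall x, pd x -> A x;
  phB : forall x, pd x -> B (ph x);
  phI : forall x y, pd x -> pd y -> ph x = ph y -> x = y }.

Lemma compar (T : Type) (A B : T -> Prop) :
  (exists h : T -> T, (forall x, A x -> B (h x)) /\
      (forall x y, A x -> A y -> h x = h y -> x = y)) \/
  (exists h : T -> T, (forall x, B x -> A (h x)) /\
      (forall x y, B x -> B y -> h x = h y -> x = y)).
Proof.
pose R (s t : pinj A B) := (forall x, pd s x -> pd t x) /\
   (forall x, pd s x -> ph t x = ph s x).
have t0 : pinj A B.
  by apply: (@PInj _ A B (fun _ => False) id) => //.
have [|||m mmax] := @zornP _ t0 R.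
- by move=> t; split.
- move=> r s t [h1 h2] [h3 h4]; split; first by move=> x /h1/h3.
  by move=> x rx; rewrite h4 ?h2 //; apply: h1.
- move=> C Ctot.
  have compat : forall s t x, C s -> C t -> pd s x -> pd t x -> ph s x = ph t x.
    move=> s t x Cs Ct ds dt.
    by case: (Ctot s t Cs Ct) => [[_ ->]|[_ ->]].
  have [hs Hhs] := glue id compat.
  pose D x := exists s, C s /\ pd s x.
  have common : forall x y, D x -> D y -> exists s, C s /\ pd s x /\ pd s y.
    move=> x y [s [Cs sx]] [t [Ct ty]].
    case: (Ctot s t Cs Ct) => [[h1 _]|[h1 _]].
      by exists t; split => //; split => //; apply: h1.
    by exists s; split => //; split => //; apply: h1.
  have p1 : forall x, D x -> A x by move=> x [s [Cs sx]]; apply: (pdA sx).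
  have p2 : forall x, D x -> B (hs x).
    by move=> x [s [Cs sx]]; rewrite (Hhs s) //; apply: phB.
  have p3 : forall x y, D x -> D y -> hs x = hs y -> x = y.
    move=> x y Dx Dy; have [s [Cs [sx sy]]] := common x y Dx Dy.
    rewrite (Hhs s x) // (Hhs s y) //; exact: phI.
  exists (PInj p1 p2 p3); move=> s Cs; split; first by move=> x sx; exists s.
  by move=> x sx /=; rewrite (Hhs s).
move: mmax; rewrite /R => mmax.
case: (pselect (forall x, A x -> pd m x)) => [hA|nA].
  left; exists (ph m); split; first by move=> x /hA; apply: phB.
  by move=> x y /hA ? /hA ?; apply: phI.
have [a [Aa nma]] : exists a, A a /\ ~ pd m a.
  apply: NNPP => hn; apply: nA => x Ax; apply: NNPP => nx; apply: hn.
  by exists x.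
case: (pselect (forall y, B y -> exists x, pd m x /\ ph m x = y)) => [hB|nB].
  right.
  exists (fun y => match pselect (exists x, pd m x /\ ph m x = y) with
                   | left e => proj1_sig (cid e) | right _ => y end).
  have Hinv : forall y, B y -> exists x, pd m x /\ ph m x = y /\ (match pselect (exists x, pd m x /\ ph m x = y) with
                   | left e => proj1_sig (cid e) | right _ => y end) = x.
    move=> y By; case: pselect => [e|ne]; last by exfalso; apply: ne; apply: hB.
    by case: (cid e) => x [mx hx] /=; exists x.
  split.
    by move=> y By; have [x [mx [_ e]]] := Hinv y By; rewrite e; exact: (pdA mx).
  move=> y1 y2 B1 B2; have [x1 [m1 [h1 e1]]] := Hinv y1 B1.
  have [x2 [m2 [h2 e2]]] := Hinv y2 B2.
  by rewrite e1 e2 => e; rewrite -h1 -h2 e.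
have [b [Bb nmb]] : exists b, B b /\ ~ (exists x, pd m x /\ ph m x = b).
  apply: NNPP => hn; apply: nB => y By; apply: NNPP => ny; apply: hn.
  by exists y.
pose D' x := pd m x \/ x = a.
pose h' x := if pselect (x = a) then b else ph m x.
have q1 : forall x, D' x -> A x by move=> x [mx|->] //; exact: (pdA mx).
have q2 : forall x, D' x -> B (h' x).
  move=> x [mx|->]; rewrite /h'; case: pselect => // xa.
  by apply: phB.
have q3 : forall x y, D' x -> D' y -> h' x = h' y -> x = y.
  move=> x y Dx Dy; rewrite /h'.
  case: (pselect (x = a)) => xa; case: (pselect (y = a)) => ya.
  - by move=> _; rewrite xa ya.
  - move=> /= e; exfalso; apply: nmb; exists y; split; last by rewrite -e.
    by case: Dy.
  - move=> /= e; exfalso; apply: nmb; exists x; split; last by rewrite e.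
    by case: Dx.
  - by apply: phI; [case: Dx|case: Dy].
have := mmax (PInj q1 q2 q3); case.
  split; first by move=> x mx; left.
  by move=> x mx /=; rewrite /h'; case: pselect => // xa; rewrite xa in mx.
by move=> /(_ a (or_intror erefl)).
Qed.

Record hobj (K : Type) (j : nat -> K) := HObj {
  ha : K -> Prop; hf : K * K -> K;
  haj : forall n, ha (j n);
  haf : forall x y, ha x -> ha y -> ha (hf (x, y));
  hfI : forall x y x' y', ha x -> ha y -> ha x' -> ha y' ->
        hf (x, y) = hf (x', y') -> x = x' /\ y = y' }.

Lemma hess (K : Type) (j : nat -> K) : injective j ->
  exists m : K * K -> K, injective m.
Proof.
move=> jI.
pose R (s t : hobj j) := (forall x, ha s x -> ha t x) /\
   (forall x y, ha s x -> ha s y -> hf t (x, y) = hf s (x, y)).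
pose jinv x := match pselect (exists n, j n = x) with
               | left e => proj1_sig (cid e) | right _ => 0 end.
have jinvK : forall n, jinv (j n) = n.
  move=> n; rewrite /jinv; case: pselect => [e|ne]; last by exfalso; apply: ne; exists n.
  by case: (cid e) => k /= /jI.
have t0 : hobj j.
  pose a0 x := exists n, j n = x.
  pose f0 (p : K * K) := j (pickle (jinv p.1, jinv p.2)).
  have c1 : forall n, a0 (j n) by move=> n; exists n.
  have c2 : forall x y, a0 x -> a0 y -> a0 (f0 (x, y)) by move=> x y _ _; exists (pickle (jinv x, jinv y)).
  have c3 : forall x y x' y', a0 x -> a0 y -> a0 x' -> a0 y' ->
        f0 (x, y) = f0 (x', y') -> x = x' /\ y = y'.
    move=> x y x' y' [a <-] [b <-] [c <-] [d <-]; rewrite /f0 /= !jinvK.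
    by move=> /jI /(pcan_inj pickleK) [-> ->].
  exact: (HObj c1 c2 c3).
have [|||m mmax] := @zornP _ t0 R.
- by move=> t; split.
- move=> r s t [h1 h2] [h3 h4]; split; first by move=> x /h1/h3.
  by move=> x y rx ry; rewrite h4 ?h2 //; apply: h1.
- move=> C Ctot.
  case: (pselect (exists t, C t)) => [[t1 Ct1]|nC]; last first.
    by exists t0 => s Cs; exfalso; apply: nC; exists s.
  have compat : forall s t p, C s -> C t -> (ha s p.1 /\ ha s p.2) ->
       (ha t p.1 /\ ha t p.2) -> hf s p = hf t p.
    move=> s t [x y] Cs Ct [sx sy] [tx ty].
    by case: (Ctot s t Cs Ct) => [[_ ->]|[_ ->]].
  have [hs Hhs] := glue (hf t1) compat.
  pose D x := exists s, C s /\ ha s x.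
  have common : forall x y, D x -> D y -> exists s, C s /\ ha s x /\ ha s y.
    move=> x y [s [Cs sx]] [t [Ct ty]].
    case: (Ctot s t Cs Ct) => [[h1 _]|[h1 _]].
      by exists t; split => //; split => //; apply: h1.
    by exists s; split => //; split => //; apply: h1.
  have p1 : forall n, D (j n) by move=> n; exists t1; split => //; apply: haj.
  have p2 : forall x y, D x -> D y -> D (hs (x, y)).
    move=> x y Dx Dy; have [s [Cs [sx sy]]] := common x y Dx Dy.
    by exists s; split => //; rewrite (Hhs s) //; apply: haf.
  have p3 : forall x y x' y', D x -> D y -> D x' -> D y' ->
        hs (x, y) = hs (x', y') -> x = x' /\ y = y'.
    move=> x y x' y' Dx Dy Dx' Dy'.
    have [s [Cs [sx sy]]] := common x y Dx Dy.
    have [s' [Cs' [sx' sy']]] := common x' y' Dx' Dy'.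
    have [u [Cu [[ux uy] [ux' uy']]]] : exists u, C u /\ (ha u x /\ ha u y) /\ (ha u x' /\ ha u y').
      case: (Ctot s s' Cs Cs') => [[h1 _]|[h1 _]].
        by exists s'; split => //; split => //; split; apply: h1.
      by exists s; split => //; split => //; split; apply: h1.
    rewrite (Hhs u (x, y)) // (Hhs u (x', y')) //; exact: hfI.
  exists (HObj p1 p2 p3); move=> s Cs; split; first by move=> x sx; exists s.
  by move=> x y sx sy /=; rewrite (Hhs s).
move: mmax; rewrite /R => mmax.
case: (compar (ha m) (fun x => ~ ha m x)) => [[h [hB hI]]|[h [hA hI]]].
  pose A' x := ha m x \/ exists y, ha m y /\ h y = x.
  pose pre x := if pselect (ha m x) then x else
     match pselect (exists y, ha m y /\ h y = x) with
     | left e => proj1_sig (cid e) | right _ => x end.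
  have preA : forall x, ha m x -> pre x = x.
    by move=> x mx; rewrite /pre; case: pselect.
  have preN : forall x, A' x -> ~ ha m x -> ha m (pre x) /\ h (pre x) = x.
    move=> x Ax nx; rewrite /pre; destruct (pselect (ha m x)) as [mx|nmx]; first by [].
    destruct (pselect (exists y, ha m y /\ h y = x)) as [e|ne]; last by exfalso; case: Ax.
    by case: (cid e) => y [my hy].
  have preM : forall x, A' x -> ha m (pre x).
    move=> x Ax; case: (pselect (ha m x)) => mx; first by rewrite preA.
    by case: (preN x Ax mx).
  have recon : forall x x', A' x -> A' x' -> pre x = pre x' ->
      (ha m x <-> ha m x') -> x = x'.
    move=> x x' Ax Ax' e [i1 i2].
    case: (pselect (ha m x)) => mx.
      by rewrite -(preA x mx) e preA //; apply: i1.
    have mx' : ~ ha m x' by move=> /i2.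
    have [_ e1] := preN x Ax mx; have [_ e2] := preN x' Ax' mx'.
    by rewrite -e1 -e2 e.
  pose tag x y := if pselect (ha m x) then 0 else if pselect (ha m y) then 1 else 2.
  have tagP : forall x y x' y', ~ (ha m x /\ ha m y) -> ~ (ha m x' /\ ha m y') ->
      tag x y = tag x' y' -> (ha m x <-> ha m x') /\ (ha m y <-> ha m y').
    move=> x y x' y'; rewrite /tag.
    case: (pselect (ha m x)) => hx; case: (pselect (ha m y)) => hy;
    case: (pselect (ha m x')) => hx'; case: (pselect (ha m y')) => hy';
    move=> n1 n2 e; simpl in e; (try discriminate); tauto.
  pose f' (p : K * K) := if pselect (ha m p.1 /\ ha m p.2) then hf m p
      else h (hf m (hf m (pre p.1, pre p.2), j (tag p.1 p.2))).
  have inner : forall x y, A' x -> A' y ->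
      ha m (hf m (hf m (pre x, pre y), j (tag x y))).
    by move=> x y Ax Ay; apply: haf; [apply: haf; apply: preM | apply: haj].
  have q1 : forall n, A' (j n) by move=> n; left; apply: haj.
  have q2 : forall x y, A' x -> A' y -> A' (f' (x, y)).
    move=> x y Ax Ay; rewrite /f' /=; case: pselect => [[mx my]|nxy].
      by left; apply: haf.
    by right; eexists; split; last reflexivity; apply: inner.
  have q3 : forall x y x' y', A' x -> A' y -> A' x' -> A' y' ->
        f' (x, y) = f' (x', y') -> x = x' /\ y = y'.
    move=> x y x' y' Ax Ay Ax' Ay'; rewrite /f' /=.
    case: pselect => [[mx my]|nxy]; case: pselect => [[mx' my']|nxy'].
    - exact: hfI.
    - move=> /= e; exfalso; apply: (hB _ (inner x' y' Ax' Ay')).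
      by rewrite -e; apply: haf.
    - move=> /= e; exfalso; apply: (hB _ (inner x y Ax Ay)).
      by rewrite e; apply: haf.
    - move=> /= /hI e.
      have e' := e (inner x y Ax Ay) (inner x' y' Ax' Ay').
      have [e1 et] := hfI (haf (preM x Ax) (preM y Ay)) (@haj _ _ m _)
         (haf (preM x' Ax') (preM y' Ay')) (@haj _ _ m _) e'.
      have [e2 e3] := hfI (preM x Ax) (preM y Ay) (preM x' Ax') (preM y' Ay') e1.
      move/jI: et => et.
      have [i1 i2] := tagP x y x' y' nxy nxy' et.
      by split; apply: recon.
  have := mmax (HObj q1 q2 q3); case.
    split; first by move=> x mx; left.
    by move=> x y mx my /=; rewrite /f'; case: pselect => // [[]].
  move=> /(_ (h (j 0))) hsub _.
  exfalso; apply: (hB (j 0) (@haj _ _ m 0)); apply: hsub; right; exists (j 0); split => //.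
  exact: haj.
pose g x := if pselect (ha m x) then hf m (x, j 0) else hf m (h x, j 1).
have gA : forall x, ha m (g x).
  move=> x; rewrite /g; case: pselect => mx; apply: haf => //; try apply: haj.
  by apply: hA.
have gI : injective g.
  move=> x y; rewrite /g.
  case: (pselect (ha m x)) => mx; case: (pselect (ha m y)) => my.
  - by move=> e; case: (hfI mx (@haj _ _ m 0) my (@haj _ _ m 0) e).
  - by move=> e; case: (hfI mx (@haj _ _ m 0) (hA y my) (@haj _ _ m 1) e) => _ /jI.
  - by move=> e; case: (hfI (hA x mx) (@haj _ _ m 1) my (@haj _ _ m 0) e) => _ /jI.
  - move=> e; case: (hfI (hA x mx) (@haj _ _ m 1) (hA y my) (@haj _ _ m 1) e) => e1 _.
    exact: hI.
exists (fun p => hf m (g p.1, g p.2)).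
move=> [x y] [x' y'] /= e.
by case: (hfI (gA x) (gA y) (gA x') (gA y') e) => /gI -> /gI ->.
Qed.

Lemma cantor (K' : Type) (g : (K' -> bool) -> K') : ~ injective g.
Proof.
move=> gI.
pose D k := ~~ (match pselect (exists p, g p = k) with
                | left e => proj1_sig (cid e) k | right _ => false end).
have : D (g D) = ~~ D (g D).
  rewrite {1}/D; case: pselect => [e|ne]; last by exfalso; apply: ne; exists D.
  by case: (cid e) => p /= /gI ->.
by case: (D (g D)).
Qed.

Lemma prod_inj (K X P : Type) : (exists e : X -> K, injective e) ->
  (exists i : P -> K, injective i) -> (exists j : nat -> K, injective j) ->
  exists f : X * P -> K, injective f.
Proof.
move=> [e eI] [i iI] [j jI]; have [m mI] := hess jI.
exists (fun y => m (e y.1, i y.2)) => [[x p] [x' p']] /= /mI [/eI -> /iI ->] //.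
Qed.

Definition constp (K : Type) (X : PtSet K) : pt_hom X X :=
  exist _ (fun _ : X => pt_base X) erefl.

Lemma pt_hom_eq (K : Type) (X Y : PtSet K) (f g : pt_hom X Y) :
  sval f = sval g -> f = g.
Proof.
case: f => f hf; case: g => g hg /= e; subst g; f_equal; apply: Prop_irrelevance.
Qed.

Lemma ne_key (K K' : Type)
  (hpow : exists i : (K' -> bool) -> K, injective i)
  (hinf : exists j : nat -> K, injective j)
  (F : NEFunctor K K') (X : NESet K) (x0 : X) (u : nef_obj F X) :
  nef_map F (fun _ : X => x0) u = u.
Proof.
apply: NNPP => hne.
have [f fI] := prod_inj (ne_small X) hpow hinf.
pose Y : NESet K := {| ne_car := (X * (K' -> bool))%type;
   ne_small := ex_intro _ f fI; ne_nonempty := inhabits (x0, fun _ : K' => true) |}.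
pose h (p : K' -> bool) : X -> Y := fun x => (x, p).
pose r (p : K' -> bool) : Y -> X := fun y => if pselect (y.2 = p) then y.1 else x0.
have [e eI] := ne_small (nef_obj F Y).
apply: (@cantor _ (fun p => e (nef_map F (h p) u))).
move=> p q /eI epq; apply: NNPP => npq.
have : nef_map F (r p) (nef_map F (h p) u) = nef_map F (r p) (nef_map F (h q) u).
  by rewrite epq.
rewrite -!nef_comp.
have -> : r p \o h p = (fun a : X => a).
  by apply: funext => x; rewrite /r /h /=; case: pselect.
have -> : r p \o h q = (fun _ : X => x0).
  apply: funext => x; rewrite /r /h /=; case: pselect => // qp.
  by exfalso; apply: npq; rewrite qp.
rewrite nef_id => e'; apply: hne; by rewrite -e'.
Qed.

Lemma pt_key (K K' : Type)
  (hpow : exists i : (K' -> bool) -> K, injective i)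
  (hinf : exists j : nat -> K, injective j)
  (F : PtFunctor K K') (X : PtSet K) (u : pf_obj F X) :
  sval (pf_map F (constp X)) u = u.
Proof.
apply: NNPP => hne.
have [f fI] := prod_inj (pt_small X) hpow hinf.
pose p0 : K' -> bool := fun _ => true.
pose Y : PtSet K := {| pt_car := (X * (K' -> bool))%type;
   pt_base := (pt_base X, p0); pt_small := ex_intro _ f fI |}.
pose hfun (p : K' -> bool) : X -> Y :=
  fun x => if pselect (x = pt_base X) then (pt_base X, p0) else (x, p).
have hP p : hfun p (pt_base X) = pt_base Y by rewrite /hfun; case: pselect.
pose h p : pt_hom X Y := exist _ (hfun p) (hP p).
pose rfun (p : K' -> bool) : Y -> X :=
  fun y => if pselect (y.2 = p) then y.1 else pt_base X.
have rP p : rfun p (pt_base Y) = pt_base X by rewrite /rfun; case: pselect.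
pose r p : pt_hom Y X := exist _ (rfun p) (rP p).
have [e eI] := pt_small (pf_obj F Y).
apply: (@cantor _ (fun p => e (sval (pf_map F (h p)) u))).
move=> p q /eI epq; apply: NNPP => npq.
have : sval (pf_map F (r p)) (sval (pf_map F (h p)) u) =
       sval (pf_map F (r p)) (sval (pf_map F (h q)) u) by rewrite epq.
rewrite -!pf_comp.
have -> : pt_comp (h p) (r p) = pt_id X.
  apply: pt_hom_eq; apply: funext => x /=; rewrite /rfun /hfun.
  case: (pselect (x = pt_base X)) => [xb|nx] /=; case: pselect => //= pp;
    first [by rewrite xb | by exfalso; apply: pp].
have -> : pt_comp (h q) (r p) = constp X.
  apply: pt_hom_eq; apply: funext => x /=; rewrite /rfun /hfun.
  case: (pselect (x = pt_base X)) => [xb|nx] /=; case: pselect => //= qp;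
    first [by rewrite xb | by exfalso; apply: npq; rewrite qp].
rewrite pf_id => e'; apply: hne; by rewrite -e'.
Qed.

Theorem proposition2p10 (K K' : Type)
  (hpow : exists i : (K' -> bool) -> K, injective i)   (* kappa >= 2^kappa' *)
  (hinf : exists j : nat -> K, injective j) :           (* kappa infinite *)
  (forall F : NEFunctor K K', NE_iso_const F) /\
  (forall F : PtFunctor K K', Pt_iso_const F).
Proof.
have hu : exists f : unit -> K, injective f.
  by case: hinf => j _; exists (fun _ => j 0) => [[] []].
split.
- move=> F.
  pose U : NESet K := {| ne_car := unit; ne_small := hu; ne_nonempty := inhabits tt |}.
  exists (nef_obj F U), (fun X : NESet K => nef_map F (fun _ : X => (tt : U))).
  split.
  + move=> X; case: (ne_nonempty X) => x0.
    exists (nef_map F (fun _ : U => x0)).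
    * by move=> v; rewrite -nef_comp; exact (ne_key hpow hinf x0 v).
    * by move=> w; rewrite -nef_comp; exact (ne_key hpow hinf (tt : U) w).
  + by move=> X Y f x; rewrite -nef_comp.
- move=> F.
  pose U : PtSet K := {| pt_car := unit; pt_base := tt; pt_small := hu |}.
  pose bang (X : PtSet K) : pt_hom X U := exist _ (fun _ : X => (tt : U)) erefl.
  pose ptin (X : PtSet K) : pt_hom U X := exist _ (fun _ : U => pt_base X) erefl.
  exists (pf_obj F U), (fun X : PtSet K => pf_map F (bang X)).
  split.
  + move=> X; exists (sval (pf_map F (ptin X))).
    * move=> v; rewrite -pf_comp.
      have -> : pt_comp (bang X) (ptin X) = constp X by apply: pt_hom_eq.
      exact: pt_key.
    * move=> w; rewrite -pf_comp.
      have -> : pt_comp (ptin X) (bang X) = constp U.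
        by apply: pt_hom_eq; apply: funext => [[]].
      exact: pt_key.
  + move=> X Y f x; rewrite -pf_comp.
    by have -> : pt_comp f (bang Y) = bang X by apply: pt_hom_eq.
Qed.
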